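(* In the setting of the context, the linear operator $\mathcal M:\mathbb S^n\to\mathbb S^n$ satisfies: (a) $\mathcal M$ is firmly nonexpansive with respect to the Frobenius norm, i.e., $\langle\mathcal M(H),H\rangle\ge\|\mathcal M(H)\|_F^2$ for all $H$; (b) the sequence of operators $\mathcal M^k$ converges to $\Pi_{\mathrm{Fix}(\mathcal M)}$ as $k\to\infty$; (c) $H\in\mathrm{Fix}(\mathcal M)$ if and only if $H_O=0$, $Q_\star\begin{pmatrix}H_X&0\\0&0\end{pmatrix}Q_\star^\top\in\mathcal N(\mathcal A)$, and $Q_\star\begin{pmatrix}0&0\\0&H_S\end{pmatrix}Q_\star^\top\in\mathcal R(\mathcal A^* )$; (d) $\|\mathcal M-\Pi_{\mathrm{Fix}(\mathcal M)}\|_{\mathrm{op}}<1$.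
   Context: $\mathbb S^n$: real symmetric matrices with $\langle X,Y\rangle=\operatorname{tr}(XY)$ and Frobenius norm. Data $A_1,\dots,A_m\in\mathbb S^n$ defining $\mathcal AX=(\langle A_i,X\rangle)_i$, assumed surjective; $\mathcal A^*y=\sum y_iA_i$; $\mathcal R(\mathcal A^* )$ range, $\mathcal N(\mathcal A)$ null space; $\mathcal P=\mathcal A^*(\mathcal A\mathcal A^* )^{-1}\mathcal A$, $\mathcal P^\perp=\mathrm{Id}-\mathcal P$. Let $Z_\star=X_\star-\sigma S_\star$ ($\sigma>0$) for a strictly complementary KKT point $(X_\star,y_\star,S_\star)$ of the SDP pair min $\langle C,X\rangle$ s.t. $\mathcal AX=b$, $X\succeq0$ / max $b^\top y$ s.t. $\mathcal A^*y+S=C$, $S\succeq0$ (the limit of the one-step ADMM iteration), so that for an orthogonal $Q_\star$, $Z_\star=Q_\star\operatorname{diag}(\lambda_1,\dots,\lambda_n)Q_\star^\top$ with $\lambda_1\ge\dots\ge\lambda_r>0>\lambda_{r+1}\ge\dots\ge\lambda_n$, $r=\operatorname{rank}X_\star$. $\Theta\in\mathbb R^{(n-r)\times r}$, $\Theta_{ij}=\lambda_j/(\lambda_j-\lambda_{i+r})$, $\Omega=\begin{pmatrix}E_r&\Theta^\top\\\Theta&0\end{pmatrix}$ ($E_r$ all-ones). For $H\in\mathbb S^n$ write $Q_\star^\top HQ_\star=\begin{pmatrix}H_X&H_O^\top\\H_O&H_S\end{pmatrix}$, $H_X\in\mathbb S^r$, $H_O\in\mathbb R^{(n-r)\times r}$,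 $H_S\in\mathbb S^{n-r}$. $\mathcal D(H)=Q_\star(\Omega\circ(Q_\star^\top HQ_\star))Q_\star^\top$ ($\circ$ Hadamard), $\mathcal D^\perp(H)=H-\mathcal D(H)$, $\mathcal M(H)=\mathcal P\mathcal D^\perp(H)+\mathcal P^\perp\mathcal D(H)$. $\mathrm{Fix}(\mathcal M)=\{H:\mathcal M(H)=H\}$, $\Pi_{\mathrm{Fix}(\mathcal M)}$ the orthogonal projection onto it, $\|\cdot\|_{\mathrm{op}}$ the Frobenius-induced operator norm. *)

(* Defs.v *)
From HB Require Import structures.
From mathcomp Require Import all_boot all_order all_algebra.
From mathcomp Require Import all_classical all_reals all_analysis.
Set Implicit Arguments. Unset Strict Implicit. Unset Printing Implicit Defensive.
Import Order.TTheory GRing.Theory Num.Theory.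
Local Open Scope ring_scope.
Local Open Scope classical_set_scope.

Section SDPDefs.
Variable R : realType.

Definition symmx (n : nat) (X : 'M[R]_n) : Prop := X^T = X.

Definition inner (n : nat) (X Y : 'M[R]_n) : R := \tr (X *m Y).
Definition fnorm (n : nat) (X : 'M[R]_n) : R := Num.sqrt (inner X X).

Definition psdmx (n : nat) (X : 'M[R]_n) : Prop :=
  symmx X /\ forall v : 'cV[R]_n, 0 <= (v^T *m X *m v) 0 0.

Definition opA (m n : nat) (A : 'I_m -> 'M[R]_n) (X : 'M[R]_n) : 'cV[R]_m :=
  \col_i inner (A i) X.
Definition opAadj (m n : nat) (A : 'I_m -> 'M[R]_n) (y : 'cV[R]_m) : 'M[R]_n :=
  \sum_i y i 0 *: A i.

(* matrix of A A^adj: [A A^adj]_{ij} = <A_i, A_j> *)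
Definition gramA (m n : nat) (A : 'I_m -> 'M[R]_n) : 'M[R]_m :=
  \matrix_(i, j) inner (A i) (A j).

Definition projP (m n : nat) (A : 'I_m -> 'M[R]_n) (X : 'M[R]_n) : 'M[R]_n :=
  opAadj A (invmx (gramA A) *m opA A X).
Definition projPperp (m n : nat) (A : 'I_m -> 'M[R]_n) (X : 'M[R]_n) : 'M[R]_n :=
  X - projP A X.

(* Ω = [[E_r, Θ^T],[Θ, 0]] with Θ_{ij} = λ_j/(λ_j - λ_{i+r}), written entrywise
   with 0-based indices: rows/columns < r form the "X" block. *)
Definition Omega (n r : nat) (lam : 'I_n -> R) : 'M[R]_n :=
  \matrix_(p, q)
    if (p < r)%N && (q < r)%N then 1
    else if (p < r)%N && ~~ (q < r)%N then lam p / (lam p - lam q)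
    else if ~~ (p < r)%N && (q < r)%N then lam q / (lam q - lam p)
    else 0.

Definition hadamard (n : nat) (X Y : 'M[R]_n) : 'M[R]_n :=
  \matrix_(i, j) (X i j * Y i j).

Definition opD (n r : nat) (Q : 'M[R]_n) (lam : 'I_n -> R) (H : 'M[R]_n) :=
  Q *m hadamard (Omega r lam) (Q^T *m H *m Q) *m Q^T.
Definition opDperp (n r : nat) (Q : 'M[R]_n) (lam : 'I_n -> R) (H : 'M[R]_n) :=
  H - opD r Q lam H.

Definition opM (m n r : nat) (A : 'I_m -> 'M[R]_n) (Q : 'M[R]_n)
  (lam : 'I_n -> R) (H : 'M[R]_n) : 'M[R]_n :=
  projP A (opDperp r Q lam H) + projPperp A (opD r Q lam H).

Definition isFix (n : nat) (T : 'M[R]_n -> 'M[R]_n) (H : 'M[R]_n) : Prop :=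
  symmx H /\ T H = H.

Definition is_proj_Fix (n : nat) (T Pi : 'M[R]_n -> 'M[R]_n) : Prop :=
  forall H, symmx H ->
    isFix T (Pi H) /\ (forall K, isFix T K -> inner (H - Pi H) K = 0).

Definition opnorm (n : nat) (T : 'M[R]_n -> 'M[R]_n) : R :=
  sup [set fnorm (T H) | H in [set H : 'M[R]_n | symmx H /\ fnorm H <= 1]].

End SDPDefs.

(* Main.v *)
Require Import Defs.
From HB Require Import structures.
From mathcomp Require Import all_boot all_order all_algebra.
From mathcomp Require Import all_classical all_reals all_analysis.
From mathcomp Require Import ring lra.
Import Order.TTheory GRing.Theory Num.Theory.
Import numFieldNormedType.Exports.
Local Open Scope ring_scope.
Local Open Scope classical_set_scope.
Set Implicit Arguments. Unset Strict Implicit. Unset Printing Implicit Defensive.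

Section IP.
Variable R : realType.
Variable n : nat.
Implicit Types X Y Z : 'M[R]_n.

Definition ip X Y : R := \tr (X^T *m Y).

Lemma ip_sum X Y : ip X Y = \sum_i \sum_j X j i * Y j i.
Proof.
rewrite /ip /mxtrace; apply: eq_bigr => i _; rewrite !mxE.
by apply: eq_bigr => j _; rewrite mxE.
Qed.

Lemma ipC X Y : ip X Y = ip Y X.
Proof.
rewrite !ip_sum; apply: eq_bigr => i _; apply: eq_bigr => j _; exact: mulrC.
Qed.

Lemma ipDl X Y Z : ip (X + Y) Z = ip X Z + ip Y Z.
Proof.
rewrite !ip_sum -big_split; apply: eq_bigr => i _.
rewrite -big_split; apply: eq_bigr => j _; by rewrite !mxE mulrDl.
Qed.

Lemma ipZl a X Z : ip (a *: X) Z = a * ip X Z.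
Proof.
rewrite !ip_sum mulr_sumr; apply: eq_bigr => i _.
rewrite mulr_sumr; apply: eq_bigr => j _; by rewrite !mxE mulrA.
Qed.

Lemma ipNl X Z : ip (- X) Z = - ip X Z.
Proof. by rewrite -scaleN1r ipZl mulN1r. Qed.

Lemma ipBl X Y Z : ip (X - Y) Z = ip X Z - ip Y Z.
Proof. by rewrite ipDl ipNl. Qed.

Lemma ipDr X Y Z : ip Z (X + Y) = ip Z X + ip Z Y.
Proof. by rewrite ipC ipDl !(ipC Z). Qed.
Lemma ipZr a X Z : ip Z (a *: X) = a * ip Z X.
Proof. by rewrite ipC ipZl ipC. Qed.
Lemma ipNr X Z : ip Z (- X) = - ip Z X.
Proof. by rewrite ipC ipNl ipC. Qed.
Lemma ipBr X Y Z : ip Z (X - Y) = ip Z X - ip Z Y.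
Proof. by rewrite ipDr ipNr. Qed.
Lemma ip0l X : ip 0 X = 0.
Proof. by rewrite -(scale0r 0) ipZl mul0r. Qed.
Lemma ip0r X : ip X 0 = 0.
Proof. by rewrite ipC ip0l. Qed.

Lemma ip_sumr (I : finType) X (G : I -> 'M[R]_n) :
  ip X (\sum_i G i) = \sum_i ip X (G i).
Proof.
apply: (big_ind2 (fun a b => ip X b = a)) => //; first by rewrite ip0r.
by move=> a1 b1 a2 b2 <- <-; rewrite ipDr.
Qed.

Lemma ip_ge0 X : 0 <= ip X X.
Proof.
rewrite ip_sum; apply: sumr_ge0 => i _; apply: sumr_ge0 => j _.
by rewrite -expr2 sqr_ge0.
Qed.

Lemma ip_eq0 X : ip X X = 0 -> X = 0.
Proof.
rewrite ip_sum => H; apply/matrixP => j i; rewrite mxE.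
have H1 : \sum_j X j i * X j i = 0.
  apply: (psumr_eq0P _ H) => // i' _; apply: sumr_ge0 => j' _; by rewrite -expr2 sqr_ge0.
have : X j i * X j i = 0.
  apply: (psumr_eq0P _ H1) => // j' _; by rewrite -expr2 sqr_ge0.
by move/eqP; rewrite mulf_eq0 orbb => /eqP.
Qed.

Lemma ip_sym X Y : symmx X -> inner X Y = ip X Y.
Proof. by rewrite /symmx /inner /ip => ->. Qed.

Lemma fnorm_sq X : symmx X -> fnorm X ^+ 2 = ip X X.
Proof. by move=> sX; rewrite /fnorm ip_sym // sqr_sqrtr // ip_ge0. Qed.

Lemma fnorm_ge0 X : 0 <= fnorm X.
Proof. exact: sqrtr_ge0. Qed.

Lemma ip_conj (Q Y Z : 'M[R]_n) : ip (Q *m Y *m Q^T) Z = ip Y (Q^T *m Z *m Q).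
Proof.
by rewrite /ip !trmx_mul trmxK -!mulmxA mxtrace_mulC !mulmxA.
Qed.

Lemma ip_had (W X Y : 'M[R]_n) : ip (hadamard W X) Y = ip X (hadamard W Y).
Proof.
rewrite !ip_sum; apply: eq_bigr => i _; apply: eq_bigr => j _; rewrite !mxE.
by rewrite mulrCA mulrA.
Qed.

End IP.

Section Proj.
Variable R : realType.
Variables (n k : nat) (F : 'I_k -> 'M[R]_n).

Definition cA (X : 'M[R]_n) : 'cV[R]_k := \col_i ip (F i) X.
Definition adj (y : 'cV[R]_k) : 'M[R]_n := \sum_i y i 0 *: F i.
Definition gram : 'M[R]_k := \matrix_(i, j) ip (F i) (F j).
Definition prj (X : 'M[R]_n) : 'M[R]_n := adj (invmx gram *m cA X).

Lemma cAD X Y : cA (X + Y) = cA X + cA Y.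
Proof. by apply/matrixP => i j; rewrite !mxE ipDr. Qed.
Lemma cAZ a X : cA (a *: X) = a *: cA X.
Proof. by apply/matrixP => i j; rewrite !mxE ipZr. Qed.
Lemma cAB X Y : cA (X - Y) = cA X - cA Y.
Proof. by apply/matrixP => i j; rewrite !mxE ipBr. Qed.
Lemma adjD y z : adj (y + z) = adj y + adj z.
Proof. by rewrite /adj -big_split; apply: eq_bigr => i _; rewrite mxE scalerDl. Qed.
Lemma adjZ a y : adj (a *: y) = a *: adj y.
Proof. by rewrite /adj scaler_sumr; apply: eq_bigr => i _; rewrite mxE scalerA. Qed.
Lemma prjD X Y : prj (X + Y) = prj X + prj Y.
Proof. by rewrite /prj cAD mulmxDr adjD. Qed.
Lemma prjZ a X : prj (a *: X) = a *: prj X.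
Proof. by rewrite /prj cAZ -scalemxAr adjZ. Qed.
Lemma prjN X : prj (- X) = - prj X.
Proof. by rewrite -scaleN1r prjZ scaleN1r. Qed.
Lemma prjB X Y : prj (X - Y) = prj X - prj Y.
Proof. by rewrite prjD prjN. Qed.

Lemma ip_adjl y X : ip (adj y) X = (y^T *m cA X) 0 0.
Proof.
rewrite ipC /adj ip_sumr mxE; apply: eq_bigr => i _.
by rewrite ipZr !mxE ipC.
Qed.

Lemma cA_adj y : cA (adj y) = gram *m y.
Proof.
apply/matrixP => i j; rewrite !mxE (ord1 j) /adj ip_sumr.
by apply: eq_bigr => l _; rewrite ipZr !mxE mulrC.
Qed.

Lemma gram_tr : gram^T = gram.
Proof. by apply/matrixP => i j; rewrite !mxE ipC. Qed.

Lemma gram_unit : (forall y, adj y = 0 -> y = 0) -> gram \in unitmx.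
Proof.
move=> ind; rewrite -row_free_unit -kermx_eq0; apply/eqP/row_matrixP => i.
rewrite row0; set v := row i _.
have hv : v *m gram = 0 by apply/eqP; rewrite -sub_kermx row_sub.
have hv' : gram *m v^T = 0 by rewrite -gram_tr -trmx_mul hv trmx0.
suff : v^T = 0 by move/(congr1 trmx); rewrite trmxK trmx0.
apply: ind; apply: ip_eq0; rewrite ip_adjl cA_adj hv' mulmx0 mxE //.
Qed.

Hypothesis Gu : gram \in unitmx.

Lemma cA_prj X : cA (prj X) = cA X.
Proof. by rewrite /prj cA_adj mulKVmx. Qed.

Lemma prj_adj y : prj (adj y) = adj y.
Proof. by rewrite /prj cA_adj mulKmx. Qed.

Lemma prj_idem X : prj (prj X) = prj X.
Proof. by rewrite {1}/prj cA_prj. Qed.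

Lemma ip_prj X Y : ip (prj X) Y = ip X (prj Y).
Proof.
have e (M : 'M[R]_1) : M 0 0 = M^T 0 0 by rewrite mxE.
rewrite {1}/prj ip_adjl ipC /prj ip_adjl !trmx_mul trmx_inv gram_tr.
by rewrite [RHS]e !trmx_mul trmxK trmx_inv gram_tr mulmxA.
Qed.

Lemma cA_res X : cA (X - prj X) = 0.
Proof. by rewrite cAB cA_prj subrr. Qed.

Lemma ip_res i X : ip (F i) (X - prj X) = 0.
Proof. by have := congr1 (fun M : 'cV[R]_k => M i 0) (cA_res X); rewrite !mxE. Qed.


End Proj.

Lemma frac01 (R : realType) (x y : R) : 0 < x -> y < 0 -> 0 < x / (x - y) < 1.
Proof.
move=> hx hy; have hd : 0 < x - y by lra.
by rewrite divr_gt0 //= ltr_pdivrMr // mul1r; lra.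
Qed.

Section DOp.
Variable R : realType.
Variables (n r : nat) (Q : 'M[R]_n) (lam : 'I_n -> R).
Hypothesis hpos : forall i : 'I_n, (i < r)%N -> 0 < lam i.
Hypothesis hneg : forall i : 'I_n, (r <= i)%N -> lam i < 0.

Local Notation Om := (Omega r lam).

Lemma Om_XX (p q : 'I_n) : (p < r)%N -> (q < r)%N -> Om p q = 1.
Proof. by move=> hp hq; rewrite mxE hp hq. Qed.
Lemma Om_SS (p q : 'I_n) : ~~ (p < r)%N -> ~~ (q < r)%N -> Om p q = 0.
Proof. by move=> /negbTE hp /negbTE hq; rewrite mxE hp hq. Qed.
Lemma Om_XS (p q : 'I_n) : (p < r)%N -> ~~ (q < r)%N -> 0 < Om p q < 1.
Proof.
move=> hp hq; rewrite mxE hp (negbTE hq) /=; apply: frac01; first exact: hpos.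
by apply: hneg; rewrite leqNgt.
Qed.
Lemma Om_SX (p q : 'I_n) : ~~ (p < r)%N -> (q < r)%N -> 0 < Om p q < 1.
Proof.
move=> hp hq; rewrite mxE hq (negbTE hp) /=; apply: frac01; first exact: hpos.
by apply: hneg; rewrite leqNgt.
Qed.
Lemma Om_01 (p q : 'I_n) : 0 <= Om p q <= 1.
Proof.
case hp: (p < r)%N; case hq: (q < r)%N.
- by rewrite Om_XX // lexx ler01.
- by have /andP[/ltW -> /ltW ->] := Om_XS hp (negbT hq).
- by have /andP[/ltW -> /ltW ->] := Om_SX (negbT hp) hq.
- by rewrite Om_SS ?hp ?hq // lexx ler01.
Qed.
Lemma Om_sym : Om^T = Om.
Proof.
apply/matrixP => p q; rewrite !mxE.
by case: (p < r)%N; case: (q < r)%N.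
Qed.

Definition hat (H : 'M[R]_n) := Q^T *m H *m Q.

Lemma had_tr (W X : 'M[R]_n) : (hadamard W X)^T = hadamard W^T X^T.
Proof. by apply/matrixP => i j; rewrite !mxE. Qed.
Lemma hadD (W X Y : 'M[R]_n) : hadamard W (X + Y) = hadamard W X + hadamard W Y.
Proof. by apply/matrixP => i j; rewrite !mxE mulrDr. Qed.
Lemma hadZ (W X : 'M[R]_n) a : hadamard W (a *: X) = a *: hadamard W X.
Proof. by apply/matrixP => i j; rewrite !mxE mulrCA. Qed.

Lemma opD_sym H : symmx H -> symmx (opD r Q lam H).
Proof.
rewrite /symmx /opD => sH; rewrite !trmx_mul trmxK had_tr Om_sym !trmx_mul trmxK sH.
by rewrite !mulmxA.
Qed.

Lemma opDD X Y : opD r Q lam (X + Y) = opD r Q lam X + opD r Q lam Y.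
Proof. by rewrite /opD mulmxDr mulmxDl hadD mulmxDr mulmxDl. Qed.
Lemma opDZ a X : opD r Q lam (a *: X) = a *: opD r Q lam X.
Proof. by rewrite /opD -scalemxAr -scalemxAl hadZ -scalemxAr -scalemxAl. Qed.

Lemma ip_opD X Y : ip (opD r Q lam X) Y = ip X (opD r Q lam Y).
Proof. by rewrite /opD ip_conj ip_had ipC [RHS]ipC ip_conj. Qed.

Definition blkX (Z : 'M[R]_n) : 'M[R]_n :=
  \matrix_(p, q) if (p < r)%N && (q < r)%N then Z p q else 0.
Definition blkS (Z : 'M[R]_n) : 'M[R]_n :=
  \matrix_(p, q) if ~~ (p < r)%N && ~~ (q < r)%N then Z p q else 0.

Lemma had_blocks (Z : 'M[R]_n) : Z^T = Z ->
  (forall p q : 'I_n, ~~ (p < r)%N -> (q < r)%N -> Z p q = 0) ->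
  hadamard Om Z = blkX Z /\ Z = blkX Z + blkS Z.
Proof.
move=> sZ hoff; split; apply/matrixP => p q.
- rewrite [LHS]mxE [RHS]mxE.
  case hp: (p < r)%N; case hq: (q < r)%N => /=.
  + by rewrite Om_XX // mul1r.
  + have -> : Z p q = 0 by rewrite -sZ mxE hoff ?hq ?hp.
    by rewrite mulr0.
  + by rewrite hoff ?hp ?hq // mulr0.
  + by rewrite Om_SS ?hp ?hq // mul0r.
- rewrite !mxE.
  case hp: (p < r)%N; case hq: (q < r)%N => /=.
  + by rewrite addr0.
  + by rewrite add0r -sZ mxE hoff ?hq ?hp.
  + by rewrite add0r hoff ?hp ?hq.
  + by rewrite add0r.
Qed.

Hypothesis hQ : Q^T *m Q = 1%:M.
Lemma hQ' : Q *m Q^T = 1%:M.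
Proof. exact: mulmx1C. Qed.

Lemma hat_unhat Z : hat (Q *m Z *m Q^T) = Z.
Proof. by rewrite /hat !mulmxA hQ mul1mx -mulmxA hQ mulmx1. Qed.
Lemma unhat_hat H : Q *m hat H *m Q^T = H.
Proof. by rewrite /hat !mulmxA hQ' mul1mx -mulmxA hQ' mulmx1. Qed.

Lemma ip_opD_res H : ip (opD r Q lam H) (H - opD r Q lam H) =
  \sum_i \sum_j Om j i * (1 - Om j i) * (hat H j i) ^+ 2.
Proof.
rewrite {1}/opD ip_conj -/(hat _) /hat mulmxBr mulmxBl -/(hat H) -/(opD r Q lam H).
rewrite /opD -/(hat (Q *m _ *m Q^T)) hat_unhat ip_sum.
apply: eq_bigr => i _; apply: eq_bigr => j _; rewrite !mxE; ring.
Qed.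

Lemma ip_opD_res_ge0 H : 0 <= ip (opD r Q lam H) (H - opD r Q lam H).
Proof.
rewrite ip_opD_res; apply: sumr_ge0 => i _; apply: sumr_ge0 => j _.
have /andP[h0 h1] := Om_01 j i.
by rewrite mulr_ge0 ?sqr_ge0 // mulr_ge0 // subr_ge0.
Qed.

End DOp.

Lemma lin_aux (R : realType) (V : lmodType R) (a : R) (x x' y y' : V) :
  a *: x' + y' - (a *: x + y) = a *: (x' - x) + (y' - y).
Proof. by rewrite scalerBr opprD addrACA. Qed.

Section LinMx.
Variable R : realType.
Variables (m1 n1 m2 n2 : nat) (f : 'M[R]_(m1, n1) -> 'M[R]_(m2, n2)).
Hypothesis fl : linear f.
Definition fwrap := f.
HB.instance Definition _ := GRing.isLinear.Build R 'M[R]_(m1, n1) 'M[R]_(m2, n2) *:%R fwrap fl.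
Lemma mul_vec_lin' A : mxvec A *m lin_mx f = mxvec (f A).
Proof. exact: (mul_vec_lin fwrap). Qed.
End LinMx.

Section PD.
Variable R : realType.

Lemma ip_vec n (X Y : 'M[R]_n) : ip X Y = (mxvec X *m (mxvec Y)^T) 0 0.
Proof.
rewrite ip_sum mxE exchange_big pair_big /=.
rewrite (reindex _ (curry_mxvec_bij n n)) /=.
by apply: eq_bigr => -[i j] _; rewrite /= mxE !mxvecE.
Qed.

Lemma quad_bound N (A : 'M[R]_N) (x : 'rV[R]_N) :
  (x *m A *m x^T) 0 0 <= (\sum_j \sum_i `|A i j|) * (x *m x^T) 0 0.
Proof.
set s := (x *m x^T) 0 0.
have sE : s = \sum_k x 0 k * x 0 k by rewrite /s mxE; apply: eq_bigr => k _; rewrite mxE.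
have sq : forall i, x 0 i * x 0 i <= s.
  move=> i; rewrite sE (bigD1 i) //= lerDl; apply: sumr_ge0 => k _.
  by rewrite -expr2 sqr_ge0.
rewrite mxE mulr_suml; apply: ler_sum => j _; rewrite mxE mulr_suml mulr_suml.
apply: ler_sum => i _; rewrite !mxE.
have := sq i; have := sq j; set a := x 0 i; set c := x 0 j; set d := A i j => hc ha.
have h1 : a * c <= s by nra.
have h2 : - s <= a * c by nra.
case: (lerP 0 d) => hd; [rewrite ger0_norm // | rewrite ltr0_norm //]; nra.
Qed.

Lemma pd_bound N (G : 'M[R]_N) : G^T = G ->
  (forall x : 'rV[R]_N, x != 0 -> 0 < (x *m G *m x^T) 0 0) ->
  exists2 e : R, 0 < e & forall x : 'rV[R]_N, e * (x *m x^T) 0 0 <= (x *m G *m x^T) 0 0.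
Proof.
move=> sG pG.
pose b (y z : 'rV[R]_N) := (y *m G *m z^T) 0 0.
have psd : forall y, 0 <= b y y.
  move=> y; case: (eqVneq y 0) => [->|hy]; last exact/ltW/pG.
  by rewrite /b !mul0mx mxE.
have e1 (M : 'M[R]_1) : M 0 0 = M^T 0 0 by rewrite mxE.
have bC : forall y z, b y z = b z y.
  by move=> y z; rewrite /b e1 !trmx_mul trmxK sG mulmxA.
have bDl : forall y1 y2 z, b (y1 + y2) z = b y1 z + b y2 z.
  by move=> y1 y2 z; rewrite /b !mulmxDl mxE.
have bZl : forall a y z, b (a *: y) z = a * b y z.
  by move=> a y z; rewrite /b -!scalemxAl mxE.
have bBl : forall y1 y2 z, b (y1 - y2) z = b y1 z - b y2 z.
  by move=> y1 y2 z; rewrite bDl -scaleN1r bZl mulN1r.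
have bBr : forall y1 y2 z, b z (y1 - y2) = b z y1 - b z y2.
  by move=> y1 y2 z; rewrite bC bBl !(bC z).
have bZr : forall a y z, b z (a *: y) = a * b z y.
  by move=> a y z; rewrite bC bZl bC.
have Gu : G \in unitmx.
  rewrite -row_free_unit -kermx_eq0; apply/eqP/row_matrixP => i.
  rewrite row0; set v := row i _.
  have hv : v *m G = 0 by apply/eqP; rewrite -sub_kermx row_sub.
  apply/eqP; apply: contraT => /pG; by rewrite hv mul0mx mxE ltxx.
set Gi := invmx G.
set C := \sum_j \sum_i `|Gi^T i j| + 1.
have C1 : 1 <= C by rewrite /C lerDr; apply: sumr_ge0 => j _; apply: sumr_ge0 => i _.
have C0 : 0 < C by apply: lt_le_trans C1; exact: ltr01.
exists C^-1; first by rewrite invr_gt0.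
move=> x; set s := (x *m x^T) 0 0.
have s0 : 0 <= s.
  rewrite /s mxE; apply: sumr_ge0 => k _; rewrite mxE -expr2 sqr_ge0 //.
set u := x *m Gi.
have hu : u *m G = x by rewrite /u mulmxKV.
have bux : b u x = s by rewrite /b hu.
have buu : b u u <= C * s.
  have -> : b u u = (x *m Gi^T *m x^T) 0 0.
    by rewrite /b hu /u trmx_mul mulmxA.
  apply: le_trans (quad_bound _ _) _.
  by rewrite -/s ler_wpM2r // lerDl.
have key := psd (x - C^-1 *: u).
rewrite bBl !bBr !bZl !bZr bC bux in key.
set ci := C^-1 in key *.
have cic : ci * C = 1 by rewrite mulVf // gt_eqF.
have ci0 : 0 <= ci by rewrite invr_ge0 ltW.
have h3 : ci * (ci * b u u) <= ci * s.
  have : ci * (ci * b u u) <= ci * (ci * (C * s)).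
    by rewrite ler_wpM2l // ler_wpM2l.
  by rewrite mulrA (mulrA ci C) cic mul1r.
rewrite /b in key h3 *.
lra.
Qed.

End PD.

Section MOp.
Variable R : realType.
Variables (m n r : nat) (A : 'I_m -> 'M[R]_n) (Q : 'M[R]_n) (lam : 'I_n -> R).
Hypothesis hA : forall i, symmx (A i).
Hypothesis hsurj : forall y : 'cV[R]_m, exists X, symmx X /\ opA A X = y.
Hypothesis hpos : forall i : 'I_n, (i < r)%N -> 0 < lam i.
Hypothesis hneg : forall i : 'I_n, (r <= i)%N -> lam i < 0.
Hypothesis hQ : Q^T *m Q = 1%:M.

Implicit Types X Y H : 'M[R]_n.
Local Notation D := (opD r Q lam).
Local Notation P := (prj A).
Local Notation M := (opM r A Q lam).

Lemma opA_cA X : opA A X = cA A X.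
Proof. by apply/matrixP => i j; rewrite !mxE ip_sym. Qed.
Lemma gramA_gram : gramA A = gram A.
Proof. by apply/matrixP => i j; rewrite !mxE ip_sym. Qed.
Lemma projP_eq X : projP A X = P X.
Proof. by rewrite /projP opA_cA gramA_gram. Qed.

Lemma sum_sq0 (y : 'cV[R]_m) : (y^T *m y) 0 0 = 0 -> y = 0.
Proof.
rewrite mxE => H; apply/matrixP => i j; rewrite (ord1 j) !mxE.
have H' : \sum_l y l 0 * y l 0 = 0.
  by rewrite -[RHS]H; apply: eq_bigr => l _; rewrite mxE.
have : y i 0 * y i 0 = 0.
  by apply: (psumr_eq0P _ H') => // l _; rewrite -expr2 sqr_ge0.
by move/eqP; rewrite mulf_eq0 orbb => /eqP.
Qed.

Lemma GuA : gram A \in unitmx.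
Proof.
apply: gram_unit => y hy; have [X [sX hX]] := hsurj y.
apply: sum_sq0; rewrite -{2}hX opA_cA -ip_adjl hy ip0l //.
Qed.

Lemma symmxD X Y : symmx X -> symmx Y -> symmx (X + Y).
Proof. by rewrite /symmx => hX hY; rewrite linearD /= hX hY. Qed.
Lemma symmxZ a X : symmx X -> symmx (a *: X).
Proof. by rewrite /symmx => hX; rewrite linearZ /= hX. Qed.
Lemma symmxN X : symmx X -> symmx (- X).
Proof. by rewrite /symmx => hX; rewrite linearN /= hX. Qed.
Lemma symmxB X Y : symmx X -> symmx Y -> symmx (X - Y).
Proof. by move=> hX hY; apply: symmxD => //; apply: symmxN. Qed.
Lemma symmx0 : symmx (0 : 'M[R]_n).
Proof. by rewrite /symmx trmx0. Qed.

Lemma adjA_sym y : symmx (adj A y).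
Proof.
rewrite /adj; apply: (big_ind (fun X => symmx X)); first exact: symmx0.
  exact: symmxD.
by move=> i _; apply: symmxZ.
Qed.
Lemma P_sym X : symmx (P X).
Proof. exact: adjA_sym. Qed.

Lemma M_eq H : M H = P (H - D H) + (D H - P (D H)).
Proof. by rewrite /opM /opDperp /projPperp !projP_eq. Qed.

Lemma M_sym H : symmx H -> symmx (M H).
Proof.
move=> sH; rewrite M_eq; apply: symmxD; first exact: P_sym.
by apply: symmxB; [apply: opD_sym | apply: P_sym].
Qed.

Lemma MD X Y : M (X + Y) = M X + M Y.
Proof.
rewrite !M_eq opDD.
have -> : X + Y - (D X + D Y) = (X - D X) + (Y - D Y) by rewrite opprD addrACA.
rewrite !prjD.
have -> : D X + D Y - (P (D X) + P (D Y)) = (D X - P (D X)) + (D Y - P (D Y)).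
  by rewrite opprD addrACA.
by rewrite addrACA.
Qed.

Lemma MZ a X : M (a *: X) = a *: M X.
Proof. by rewrite !M_eq opDZ -scalerBr prjZ prjZ -scalerBr -scalerDr. Qed.

Lemma firm_alg a b : ip (P b + (a - P a)) (a + b) - ip (P b + (a - P a)) (P b + (a - P a)) = ip a b.
Proof.
have e1 : ip (P b) (P b) = ip (P b) b by rewrite ip_prj ?GuA // prj_idem ?GuA // ipC.
have e2 : ip (P a) (P a) = ip (P a) a by rewrite ip_prj ?GuA // prj_idem ?GuA // ipC.
have e3 : ip (P b) (P a) = ip (P b) a by rewrite ip_prj ?GuA // prj_idem ?GuA // -ip_prj ?GuA.
have e4 : ip (P a) b = ip (P b) a by rewrite ip_prj ?GuA // ipC.
have e5 : ip (P a) (P b) = ip (P b) a by rewrite ipC.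
have e6 : ip a (P b) = ip (P b) a by rewrite ipC.
have e7 : ip a (P a) = ip (P a) a by rewrite ipC.
rewrite !(ipDl, ipDr, ipNl, ipNr).
lra.
Qed.

Lemma firm_id H : ip (M H) H - ip (M H) (M H) = ip (D H) (H - D H).
Proof.
have e : D H + (H - D H) = H by rewrite addrC subrK.
have := firm_alg (D H) (H - D H); rewrite e => <-.
by rewrite M_eq.
Qed.

Lemma firm H : ip (M H) (M H) <= ip (M H) H.
Proof. by rewrite -subr_ge0 firm_id ip_opD_res_ge0. Qed.


Lemma cA0 : cA A 0 = 0.
Proof. by apply/matrixP => i j; rewrite !mxE ip0r. Qed.
Lemma adj0 : adj A 0 = 0.
Proof. by rewrite /adj big1 // => i _; rewrite mxE scale0r. Qed.

Lemma hat_sym H : symmx H -> (hat Q H)^T = hat Q H.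
Proof. by rewrite /symmx /hat => sH; rewrite !trmx_mul trmxK sH mulmxA. Qed.

Lemma fix_char H : symmx H ->
  (M H = H <->
  [/\ (forall p q : 'I_n, ~~ (p < r)%N -> (q < r)%N -> hat Q H p q = 0),
      opA A (Q *m blkX r (hat Q H) *m Q^T) = 0
    & exists y : 'cV[R]_m, Q *m blkS r (hat Q H) *m Q^T = opAadj A y]).
Proof.
move=> sH; have GU := GuA.
have hdec : forall (hoff : forall p q : 'I_n, ~~ (p < r)%N -> (q < r)%N -> hat Q H p q = 0),
    D H = Q *m blkX r (hat Q H) *m Q^T /\ H = Q *m blkX r (hat Q H) *m Q^T + Q *m blkS r (hat Q H) *m Q^T.
  move=> hoff; have [h1 h2] := @had_blocks _ _ r lam _ (hat_sym sH) hoff.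
  split; first by rewrite /opD -/(hat Q H) h1.
  by rewrite -mulmxDl -mulmxDr -h2 unhat_hat.
split.
- move=> hM.
  have hPD : P (D H) = 0.
    have := congr1 P hM; rewrite M_eq prjD !prjB !prj_idem // subrr addr0 => e.
    have : P H - P (D H) - P H = 0 by rewrite e subrr.
    by rewrite addrAC subrr add0r => /eqP; rewrite oppr_eq0 => /eqP.
  have hDH : D H = H - P H.
    have e : H = P H + D H by rewrite -{1}hM M_eq hPD prjB hPD !subr0.
    by rewrite {2}e addrAC subrr add0r.
  have hip : ip (D H) (H - D H) = 0.
    have -> : H - D H = P H by rewrite hDH opprB addrC subrK.
    by rewrite hDH ipBl ip_prj // prj_idem // -ip_prj // ipC subrr.
  rewrite (ip_opD_res r lam hQ) in hip.
  have hoff : forall p q : 'I_n, ~~ (p < r)%N -> (q < r)%N -> hat Q H p q = 0.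
    move=> p q hp hq.
    have h1 : \sum_j Omega r lam j q * (1 - Omega r lam j q) * hat Q H j q ^+ 2 = 0.
      apply: (psumr_eq0P _ hip) => // i _; apply: sumr_ge0 => j _.
      have /andP[h0 h1] := Om_01 hpos hneg j i.
      by rewrite mulr_ge0 ?sqr_ge0 // mulr_ge0 // subr_ge0.
    have h2 : Omega r lam p q * (1 - Omega r lam p q) * hat Q H p q ^+ 2 = 0.
      apply: (psumr_eq0P _ h1) => // j _.
      have /andP[h0 h1'] := Om_01 hpos hneg j q.
      by rewrite mulr_ge0 ?sqr_ge0 // mulr_ge0 // subr_ge0.
    have := Om_SX hpos hneg hp hq; case/andP => o0 o1.
    move: h2 => /eqP; rewrite !mulf_eq0 (gt_eqF o0) subr_eq0 (gt_eqF o1) /=.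
    by rewrite orbb => /eqP.
  have [e1 e2] := hdec hoff.
  split => //.
  + by rewrite -e1 opA_cA -(cA_prj GU) hPD cA0.
  + exists (invmx (gram A) *m cA A H).
    have -> : Q *m blkS r (hat Q H) *m Q^T = H - D H.
      by rewrite e1; apply/eqP; rewrite eq_sym subr_eq addrC -e2.
    by rewrite hDH opprB addrC subrK.
- case=> hoff hN [y hy].
  have [e1 e2] := hdec hoff.
  have hPD : P (D H) = 0.
    by rewrite /prj -opA_cA e1 hN mulmx0 adj0.
  have hS : P (Q *m blkS r (hat Q H) *m Q^T) = Q *m blkS r (hat Q H) *m Q^T.
    by rewrite hy; apply: prj_adj.
  rewrite M_eq hPD subr0.
  have -> : H - D H = Q *m blkS r (hat Q H) *m Q^T.
    by rewrite e1; apply/eqP; rewrite subr_eq addrC -e2.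
  by rewrite hS e1 addrC -e2.
Qed.


Lemma MB X Y : M (X - Y) = M X - M Y.
Proof. by rewrite MD -scaleN1r MZ scaleN1r. Qed.

Definition Lf (H : 'M[R]_n) : 'M[R]_(n, n + n) := row_mx (H^T - H) (M H - H).
Lemma Lf_lin : linear Lf.
Proof.
move=> a X Y; rewrite /Lf MD MZ; set mx := M X; set my := M Y.
rewrite linearD linearZ /= scale_row_mx add_row_mx.
by rewrite !lin_aux.
Qed.

Lemma Lf0 H : (Lf H == 0) = (H^T == H) && (M H == H).
Proof. by rewrite /Lf row_mx_eq0 !subr_eq0. Qed.

Definition Kf := kermx (lin_mx Lf).
Lemma inKf H : (mxvec H <= Kf)%MS = (H^T == H) && (M H == H).
Proof. by rewrite sub_kermx (mul_vec_lin' Lf_lin) mxvec_eq0 Lf0. Qed.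

Definition Bf := row_base Kf.
Local Notation kf := (\rank Kf).
Definition fb (i : 'I_kf) : 'M[R]_n := vec_mx (row i Bf).

Lemma adj_fb y : adj fb y = vec_mx (y^T *m Bf).
Proof.
rewrite mulmx_sum_row linear_sum /=; apply: eq_bigr => i _.
by rewrite linearZ /= mxE.
Qed.

Lemma fb_indep y : adj fb y = 0 -> y = 0.
Proof.
rewrite adj_fb => /eqP; rewrite vec_mx_eq0 => /eqP h.
have : y^T *m Bf = 0 *m Bf by rewrite h mul0mx.
move/(row_free_inj (row_base_free Kf)) => h'.
by rewrite -[y]trmxK h' trmx0.
Qed.

Lemma Gfb : gram fb \in unitmx.
Proof. exact: gram_unit fb_indep. Qed.

Lemma adj_fb_fix y : symmx (adj fb y) /\ M (adj fb y) = adj fb y.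
Proof.
have : (mxvec (adj fb y) <= Kf)%MS.
  rewrite adj_fb vec_mxK; apply: submx_trans (submxMl _ _) _.
  by rewrite /Bf (eq_row_base Kf).
by rewrite inKf => /andP[/eqP h1 /eqP h2].
Qed.

Lemma fix_span H : symmx H -> M H = H -> exists u, H = adj fb u.
Proof.
move=> sH hM.
have : (mxvec H <= Bf)%MS by rewrite /Bf (eq_row_base Kf) inKf sH hM !eqxx.
case/submxP => D hD; exists D^T.
by rewrite adj_fb trmxK -hD mxvecK.
Qed.

Definition Pi0 := prj fb.

Lemma Pi0_fix H : symmx (Pi0 H) /\ M (Pi0 H) = Pi0 H.
Proof. exact: adj_fb_fix. Qed.

Lemma Pi0_orth H K : symmx K -> M K = K -> ip (H - Pi0 H) K = 0.
Proof.
move=> sK hK; have [u ->] := fix_span sK hK.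
by rewrite ipC ip_adjl cA_res ?Gfb // mulmx0 mxE.
Qed.

Lemma Pi0_proj : is_proj_Fix M Pi0.
Proof.
move=> H sH; have [s1 s2] := Pi0_fix H; split; first by split.
move=> K [sK hK]; rewrite ip_sym; last exact: symmxB.
exact: Pi0_orth.
Qed.

Lemma Pi_uniq Pi : is_proj_Fix M Pi -> forall H, symmx H -> Pi H = Pi0 H.
Proof.
move=> hPi H sH; have [[s1 h1] o1] := hPi H sH.
have [s2 h2] := Pi0_fix H.
have sd : symmx (Pi H - Pi0 H) by apply: symmxB.
have hd : M (Pi H - Pi0 H) = Pi H - Pi0 H by rewrite MB h1 h2.
have e1 := o1 _ (conj sd hd).
rewrite ip_sym in e1; last exact: symmxB.
have e2 := Pi0_orth H sd hd.
apply/eqP; rewrite -subr_eq0; apply/eqP; apply: ip_eq0.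
have e : Pi H - Pi0 H = (H - Pi0 H) - (H - Pi H).
  by rewrite opprB [RHS]addrC [RHS]addrA subrK.
by rewrite {1}e ipBl e1 e2 subrr.
Qed.


Lemma fb_fix i : symmx (fb i) /\ M (fb i) = fb i.
Proof.
have : (mxvec (fb i) <= Kf)%MS.
  rewrite /fb vec_mxK; apply: submx_trans (row_sub _ _) _.
  by rewrite /Bf (eq_row_base Kf).
by rewrite inKf => /andP[/eqP h1 /eqP h2].
Qed.

Definition perpF (W : 'M[R]_n) := forall K, symmx K -> M K = K -> ip W K = 0.

Lemma Pi0_perp W : perpF W -> Pi0 W = 0.
Proof.
move=> hW; rewrite /Pi0 /prj.
have -> : cA fb W = 0.
  apply/matrixP => i j; rewrite !mxE ipC.
  by have [s h] := fb_fix i; apply: hW.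
by rewrite mulmx0 /adj big1 // => i _; rewrite mxE scale0r.
Qed.

Lemma ipMM_expand W : ip (M W - W) (M W - W) = ip (M W) (M W) - 2 * ip (M W) W + ip W W.
Proof. set mw := M W. rewrite !(ipBl, ipBr) (ipC W mw); ring. Qed.

Lemma nonexp W : ip (M W) (M W) <= ip W W.
Proof.
have h0 := ip_ge0 (M W - W); rewrite ipMM_expand in h0.
have := firm W; lra.
Qed.

Lemma nonexp_eq W : ip (M W) (M W) = ip W W -> M W = W.
Proof.
move=> he; apply/eqP; rewrite -subr_eq0; apply/eqP; apply: ip_eq0.
apply/eqP; rewrite eq_le ip_ge0 andbT ipMM_expand.
have := firm W; lra.
Qed.

Lemma M_perp_key W F t : symmx W -> perpF W -> symmx F -> M F = F ->
  t * ip (M W) F + t ^+ 2 * (ip (M W) (M W) - ip (M W) W) <= 0.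
Proof.
move=> sW hW sF hF.
have f1 := firm (F + t *: W).
rewrite MD MZ hF in f1.
have e1 : ip F W = 0 by rewrite ipC; apply: hW.
move: f1; move: (M W) => mw.
rewrite !(ipDl, ipDr, ipZl, ipZr) e1 (ipC F mw).
nra.
Qed.

Lemma M_perp W : symmx W -> perpF W -> symmx (M W) /\ perpF (M W).
Proof.
move=> sW hW; split; first exact: M_sym.
move=> F sF hF.
have c0 : ip (M W) (M W) - ip (M W) W <= 0 by rewrite subr_le0 firm.
have key := fun t => @M_perp_key W F t sW hW sF hF.
move: c0 key; move: (ip (M W) F) (ip (M W) (M W) - ip (M W) W) => a c c0 key.
set w := (1 - c)^-1.
have w0 : 0 < w by rewrite invr_gt0; lra.
have hw : w * (1 - c) = 1 by rewrite mulVf //; apply: lt0r_neq0; lra.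
have := key (a * w).
have -> : a * w * a + (a * w) ^+ 2 * c = (a * w) ^+ 2.
  by rewrite -[X in X + _ = _]mulr1 -hw; ring.
rewrite le_eqVlt ltNge sqr_ge0 orbF sqrf_eq0 mulf_eq0 (gt_eqF w0) orbF.
by move/eqP.
Qed.


Definition Sym (H : 'M[R]_n) := 2^-1 *: (H + H^T).

Lemma Sym_sym H : symmx (Sym H).
Proof. by rewrite /symmx /Sym linearZ linearD /= trmxK addrC. Qed.

Lemma two_inv (X : 'M[R]_n) : 2^-1 *: (X + X) = X.
Proof.
apply/matrixP => i j; rewrite !mxE.
lra.
Qed.

Lemma Sym_id H : symmx H -> Sym H = H.
Proof. by rewrite /symmx /Sym => ->; rewrite two_inv. Qed.

Lemma Sym_lin : linear Sym.
Proof.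
move=> a X Y; apply/matrixP => i j; rewrite !mxE; lra.
Qed.

Lemma ip_tr X Y : ip X^T Y^T = ip X Y.
Proof.
rewrite !ip_sum exchange_big; apply: eq_bigr => i _; apply: eq_bigr => j _.
by rewrite !mxE.
Qed.

Lemma ip_split H : ip H H = ip (Sym H) (Sym H) + ip (H - Sym H) (H - Sym H).
Proof.
set S := Sym H; set K := H - S.
have sS : S^T = S := Sym_sym H.
have sK : K^T = - K.
  by apply/matrixP => i j; rewrite /K /S /Sym !mxE; lra.
have o : ip S K = 0.
  have := ip_tr S K; rewrite sS sK ipNr; lra.
have -> : ip H H = ip (S + K) (S + K) by rewrite /K addrC subrK.
clearbody K S.
by rewrite !(ipDl, ipDr) o (ipC K S) o addr0 add0r.
Qed.

Definition Nf (H : 'M[R]_n) := M (Sym H - Pi0 (Sym H)).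

Lemma Pi0_lin : linear Pi0.
Proof. by move=> a X Y; rewrite /Pi0 prjD prjZ. Qed.

Lemma Nf_lin : linear Nf.
Proof.
move=> a X Y; rewrite /Nf Sym_lin Pi0_lin -MZ -MD; congr M.
by rewrite lin_aux.
Qed.


Lemma qlt H : H != 0 -> ip (Nf H) (Nf H) < ip H H.
Proof.
move=> hH.
have h3 := ip_split H.
have sS : symmx (Sym H) := Sym_sym H.
move: h3 sS; rewrite /Nf; move: (Sym H) => S h3 sS.
have [sP hP] := Pi0_fix S.
have sW : symmx (S - Pi0 S) := symmxB sS sP.
have o : ip (S - Pi0 S) (Pi0 S) = 0 := Pi0_orth S sP hP.
have eS : Pi0 S + (S - Pi0 S) = S by rewrite addrC subrK.
have h1 := nonexp (S - Pi0 S).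
have hne := @nonexp_eq (S - Pi0 S).
have horth := fun (hM : M (S - Pi0 S) = S - Pi0 S) => Pi0_orth S sW hM.
move: h1 hne horth o eS sW; move: (S - Pi0 S) => W h1 hne horth o eS sW.
have h2 : ip S S = ip (Pi0 S) (Pi0 S) + ip W W.
  by rewrite -{1 2}eS !(ipDl, ipDr) o (ipC (Pi0 S) W) o addr0 add0r.
have g1 := ip_ge0 (H - S).
have g2 := ip_ge0 (Pi0 S).
have g3 := ip_ge0 (M W).
rewrite lt_neqAle; apply/andP; split; last by lra.
apply/negP => /eqP he; move/negP: hH; apply; apply/eqP.
have k0 : H - S = 0 by apply: ip_eq0; lra.
have p0 : Pi0 S = 0 by apply: ip_eq0; lra.
have m0 : M W = W by apply: hne; lra.
have w0 : W = 0 by apply: ip_eq0; apply: horth.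
by move/eqP: k0; rewrite subr_eq0 => /eqP ->; rewrite -eS p0 w0 addr0.
Qed.

Lemma Nf_perp W : symmx W -> perpF W -> Nf W = M W.
Proof. by move=> sW pW; rewrite /Nf (Sym_id sW) (Pi0_perp pW) subr0. Qed.

Lemma contraction : exists e : R, [/\ 0 < e, e <= 1 &
  forall W, symmx W -> perpF W -> ip (M W) (M W) <= (1 - e) * ip W W].
Proof.
pose NL := lin_mx Nf.
pose G : 'M[R]_(n * n) := 1%:M - NL *m NL^T.
have hq : forall H, (mxvec H *m G *m (mxvec H)^T) 0 0 = ip H H - ip (Nf H) (Nf H).
  move=> H; rewrite /G mulmxBr mulmx1 mulmxBl.
  have -> : mxvec H *m (NL *m NL^T) *m (mxvec H)^T = (mxvec H *m NL) *m (mxvec H *m NL)^T.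
    by rewrite trmx_mul !mulmxA.
  have hB (X Y : 'M[R]_1) : (X - Y) 0 0 = X 0 0 - Y 0 0 by rewrite !mxE.
  by rewrite /NL (mul_vec_lin' Nf_lin) hB !ip_vec.
have sG : G^T = G.
  by rewrite /G linearB /= trmx1 trmx_mul trmxK.
have pG : forall x : 'rV[R]_(n * n), x != 0 -> 0 < (x *m G *m x^T) 0 0.
  move=> x hx; rewrite -(vec_mxK x) hq subr_gt0; apply: qlt.
  by rewrite vec_mx_eq0.
have [e0 e00 he0] := pd_bound sG pG.
have key : forall W, symmx W -> perpF W -> ip (M W) (M W) <= (1 - e0) * ip W W.
  move=> W sW pW.
  have := he0 (mxvec W); rewrite hq -ip_vec.
  rewrite (Nf_perp sW pW).
  lra.
case: (lerP e0 1) => he1.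
  by exists e0; split.
exists 1; split; [exact: ltr01 | exact: lexx | ].
move=> W sW pW; apply: le_trans (key W sW pW) _.
apply: ler_wpM2r; [exact: ip_ge0 | lra].
Qed.


Lemma iter_split k H : symmx H -> iter k M H - Pi0 H = iter k M (H - Pi0 H).
Proof.
move=> sH; have [sP hP] := Pi0_fix H.
elim: k => [|k IH] //=.
have e : iter k M H = Pi0 H + iter k M (H - Pi0 H) by rewrite -IH addrC subrK.
by rewrite e MD hP addrAC subrr add0r.
Qed.

Lemma W_perp H : perpF (H - Pi0 H).
Proof. by move=> K sK hK; apply: Pi0_orth. Qed.

Lemma iter_perp k W : symmx W -> perpF W -> symmx (iter k M W) /\ perpF (iter k M W).
Proof.
move=> sW pW; elim: k => [|k [s p]] //=.
exact: M_perp.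
Qed.

Lemma iter_contr (e : R) k W : e <= 1 ->
  (forall W, symmx W -> perpF W -> ip (M W) (M W) <= (1 - e) * ip W W) ->
  symmx W -> perpF W ->
  ip (iter k M W) (iter k M W) <= (1 - e) ^+ k * ip W W.
Proof.
move=> e1 hc sW pW; elim: k => [|k IH] /=; first by rewrite expr0 mul1r.
have [s p] := iter_perp k sW pW.
apply: le_trans (hc _ s p) _.
by rewrite exprS -mulrA ler_wpM2l // subr_ge0.
Qed.

Lemma W_le H : symmx H -> ip (H - Pi0 H) (H - Pi0 H) <= ip H H.
Proof.
move=> sH; have [sP hP] := Pi0_fix H.
have o : ip (H - Pi0 H) (Pi0 H) = 0 := Pi0_orth H sP hP.
have eS : Pi0 H + (H - Pi0 H) = H by rewrite addrC subrK.
have g := ip_ge0 (Pi0 H).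
move: o eS; move: (H - Pi0 H) => W o eS.
rewrite -{1 2}eS !(ipDl, ipDr) o (ipC (Pi0 H) W) o; lra.
Qed.

Lemma fnorm0 : fnorm (0 : 'M[R]_n) = 0.
Proof. by rewrite /fnorm /inner mul0mx mxtrace0 sqrtr0. Qed.

Lemma main_bound Pi : is_proj_Fix M Pi ->
  exists c : R, [/\ 0 <= c, c < 1 & forall k H, symmx H -> fnorm H <= 1 ->
     fnorm (iter k M H - Pi H) <= c ^+ k].
Proof.
move=> hPi; have [e [e0 e1 hc]] := contraction.
exists (1 - e / 2); split; [lra | lra |].
move=> k H sH hH.
rewrite (Pi_uniq hPi sH) iter_split //.
have sW : symmx (H - Pi0 H) by apply: symmxB => //; case: (Pi0_fix H).
have [s p] := iter_perp k sW (@W_perp H).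
have h1 := iter_contr k e1 hc sW (@W_perp H).
have h2 := W_le sH.
have hH2 : ip H H <= 1.
  rewrite -fnorm_sq //; have := fnorm_ge0 H => g.
  by rewrite expr2; nra.
have hc0 : 0 <= 1 - e / 2 by lra.
rewrite -(ler_pXn2r (n := 2)) // ?nnegrE ?fnorm_ge0 ?exprn_ge0 //.
rewrite fnorm_sq //; apply: le_trans h1 _.
have hk : (1 - e) ^+ k <= ((1 - e / 2) ^+ k) ^+ 2.
  rewrite -exprM mulnC exprM; apply: lerXn2r; rewrite ?nnegrE; [lra | | nra].
  by apply: exprn_ge0.
have g1 : 0 <= (1 - e) ^+ k by apply: exprn_ge0; lra.
have g2 := ip_ge0 (H - Pi0 H).
nra.
Qed.

End MOp.

Lemma opnorm_bound (R : realType) n (T : 'M[R]_n -> 'M[R]_n) (b : R) :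
  (forall H, symmx H -> fnorm H <= 1 -> fnorm (T H) <= b) -> 0 <= opnorm T <= b.
Proof.
move=> hb; rewrite /opnorm.
set E := [set fnorm (T H) | H in [set H : 'M[R]_n | symmx H /\ fnorm H <= 1]].
have hE : E (fnorm (T 0)).
  exists 0 => //; split; first exact: symmx0.
  by rewrite fnorm0 ler01.
have ne : E !=set0 by exists (fnorm (T 0)).
have ub : ubound E b by move=> y [H [sH hH] <-]; apply: hb.
apply/andP; split; last exact: ge_sup.
apply: le_trans (fnorm_ge0 (T 0)) _.
by apply: sup_upper_bound => //; split => //; exists b.
Qed.

Unset Implicit Arguments.

Theorem proposition1 (R : realType) (m n : nat)
  (A : 'I_m -> 'M[R]_n) (C : 'M[R]_n) (b : 'cV[R]_m)
  (Xs : 'M[R]_n) (ys : 'cV[R]_m) (Ss : 'M[R]_n) (sigma : R)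
  (Q : 'M[R]_n) (lam : 'I_n -> R) :
  (* data: symmetric A_i, C; 𝒜 surjective onto R^m *)
  (forall i, symmx (A i)) -> symmx C ->
  (forall y : 'cV[R]_m, exists X, symmx X /\ opA A X = y) ->
  (* (Xs, ys, Ss) is a KKT point *)
  opA A Xs = b -> psdmx Xs ->
  opAadj A ys + Ss = C -> psdmx Ss ->
  inner Xs Ss = 0 ->
  (* strict complementarity *)
  (\rank Xs + \rank Ss = n)%N ->
  0 < sigma ->
  (* eigendecomposition of Z = Xs - sigma Ss *)
  Q^T *m Q = 1%:M ->
  Xs - sigma *: Ss = Q *m diag_mx (\row_i lam i) *m Q^T ->
  (forall i j : 'I_n, (i <= j)%N -> lam j <= lam i) ->
  (forall i : 'I_n, (i < \rank Xs)%N -> 0 < lam i) ->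
  (forall i : 'I_n, (\rank Xs <= i)%N -> lam i < 0) ->
  let r : nat := \rank Xs in
  let M := opM r A Q lam in
  (* (a) firm nonexpansiveness *)
  (forall H, symmx H -> fnorm (M H) ^+ 2 <= inner (M H) H) /\
  (* (c) characterization of Fix(M) *)
  (forall H, symmx H ->
     let Hh := Q^T *m H *m Q in
     isFix M H <->
     [/\ (forall p q : 'I_n, ~~ (p < r)%N -> (q < r)%N -> Hh p q = 0),
         opA A (Q *m (\matrix_(p, q) if (p < r)%N && (q < r)%N then Hh p q else 0)
                  *m Q^T) = 0
       & exists y : 'cV[R]_m,
           Q *m (\matrix_(p, q) if ~~ (p < r)%N && ~~ (q < r)%N then Hh p q else 0)
             *m Q^T = opAadj A y]) /\
  (* the orthogonal projection onto Fix(M) exists, and for it: *)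
  (exists Pi, is_proj_Fix M Pi) /\
  (forall Pi, is_proj_Fix M Pi ->
     (* (b) M^k -> Pi_Fix(M) *)
     (fun k : nat => opnorm (fun H => iter k M H - Pi H)) @ \oo --> (0 : R) /\
     (* (d) ||M - Pi_Fix(M)||_op < 1 *)
     opnorm (fun H => M H - Pi H) < 1).
Proof.
move=> hA hC hsurj hb hXs hdual hSs hcomp hrank hsig hQ hZ hsort hpos hneg r M.
split.
  move=> H sH; rewrite fnorm_sq; last exact: M_sym.
  rewrite ip_sym; last exact: M_sym.
  exact: (firm hA hsurj hpos hneg hQ).
split.
  move=> H sH /=.
  have [h1 h2] := fix_char hA hsurj hpos hneg hQ sH.
  split.
    by case=> _ hM; exact: h1 hM.
  by move=> hc; split => //; exact: h2 hc.
split.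
  by exists (Pi0 r A Q lam); exact: Pi0_proj.
move=> Pi hPi.
have [c [c0 c1 hc]] := main_bound hA hsurj hpos hneg hQ hPi.
have hk : forall k, 0 <= opnorm (fun H => iter k M H - Pi H) <= c ^+ k.
  by move=> k; apply: opnorm_bound => H sH hH; apply: hc.
split.
  apply: (@squeeze_cvgr _ _ _ _ (fun _ => 0) (fun k => c ^+ k)).
  - by apply: nearW => k; exact: hk.
  - exact: cvg_cst.
  - by apply: cvg_expr; rewrite ger0_norm.
have := hk 1%N; rewrite expr1 => /andP[_ h].
by apply: le_lt_trans h c1.
Qed.
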